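(* Let $G$ be a $\Delta$-regular multigraph of even order, and let $S \subsetneq V(G)$ with $|S|$ odd and $|S| \ge 3$ be such that $\langle S\rangle$ is $\Delta$-full or $\Delta$-overfull, and such that $\operatorname{ex}(\langle S\rangle, \Delta)$ is maximum among all induced odd-order subgraphs of $G$ of order at least 3 that are $\Delta$-full or $\Delta$-overfull. Then $\Delta(G_S) \le \Delta$ and $\Gamma(G_S) \le \Gamma(G)$, and similarly $\Delta(G_{S^c}) \le \Delta$ and $\Gamma(G_{S^c}) \le \Gamma(G)$, where $S^c = V(G)\setminus S$.
   Context: Multigraphs are finite and loopless, multiple edges allowed. For $S \subseteq V(G)$, $\langle S\rangle$ is the induced subgraph and $\partial(S)$ the set of edges with exactly one end in $S$. For a multigraph $H$ of odd order $n(H)\ge 3$ with $e(H)$ edges, $t(H) = 2e(H)/(n(H)-1)$; $H$ is $k$-full if $t(H)=k$ and $k$-overfull if $t(H)>k$. The $k$-excess is $\operatorname{ex}(H,k) = e(H) - k(n(H)-1)/2$. $\Gamma(G) = \max\{t(\langle R\rangle) : R\subseteq V(G), |R| \text{ odd}, |R|\ge 3\}$ (statements about $\Gamma$ of a multigraph with no such $R$ are vacuous). Shrinking: for a nonempty proper subset $S$ of $V(G)$, $G_S$ has vertex set $(V(G)\setminus S)\cup\{s\}$ for a new vertex $s$; its edges are the edges of $G - S$ together with, for each $u \notin S$, exactly as many edges $us$ as there are edges of $G$ joining $u$ to vertices of $S$. *)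

(* Defs.v *)
From mathcomp Require Import all_boot all_order all_algebra.
Set Implicit Arguments. Unset Strict Implicit. Unset Printing Implicit Defensive.
Import Order.TTheory GRing.Theory Num.Theory.

(* A finite loopless multigraph with vertices drawn from a finite type T:
   its vertex set [vtx] and the number [mult x y] of edges joining x and y
   (only values on vtx x vtx are meaningful). *)
Record mgraph (T : finType) := MGraph { vtx : {set T}; mult : T -> T -> nat }.

Definition is_mgraph (T : finType) (G : mgraph T) : Prop :=
  (forall x y, x \in vtx G -> y \in vtx G -> mult G x y = mult G y x) /\
  (forall x, x \in vtx G -> mult G x x = 0%N).

Definition deg (T : finType) (G : mgraph T) (x : T) : nat :=
  \sum_(y in vtx G) mult G x y.

Definition maxdeg (T : finType) (G : mgraph T) : nat :=
  \max_(x in vtx G) deg G x.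

Definition regular (T : finType) (G : mgraph T) (D : nat) : Prop :=
  forall x, x \in vtx G -> deg G x = D.

(* number of edges of the induced subgraph <R>: each edge counted twice
   in the ordered-pair sum *)
Definition e_ind (T : finType) (G : mgraph T) (R : {set T}) : nat :=
  (\sum_(x in R) \sum_(y in R) mult G x y)./2.

Definition tdens (T : finType) (G : mgraph T) (R : {set T}) : rat :=
  ((2 * e_ind G R)%:R / (#|R|.-1)%:R)%R.

Definition excess (T : finType) (G : mgraph T) (R : {set T}) (k : nat) : rat :=
  ((e_ind G R)%:R - (k * #|R|.-1)%:R / 2%:R)%R.

Definition odd_big (T : finType) (G : mgraph T) (R : {set T}) : bool :=
  [&& R \subset vtx G, odd #|R| & 3 <= #|R|].

(* Gamma(G) = max t(<R>) over odd R, |R| >= 3 (default 0 when there is no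
   such R; t is nonnegative so this is the true maximum otherwise) *)
Definition Gamma (T : finType) (G : mgraph T) : rat :=
  \big[Num.max/0%R]_(R : {set T} | odd_big G R) tdens G R.

(* Shrinking S to a single new vertex s; new vertex type option T, with
   s = None and u = Some u for u outside S. *)
Definition shrink_mult (T : finType) (G : mgraph T) (S : {set T})
    (a b : option T) : nat :=
  match a, b with
  | Some u, Some v => mult G u v
  | Some u, None => \sum_(w in S :&: vtx G) mult G u w
  | None, Some v => \sum_(w in S :&: vtx G) mult G v w
  | None, None => 0%N
  end.

Definition shrink (T : finType) (G : mgraph T) (S : {set T}) : mgraph (option T) :=
  MGraph ([set Some x | x in vtx G :\: S] :|: [set None]) (shrink_mult G S).

(* Main.v *)
Require Import Defs.
From mathcomp Require Import all_boot all_order all_algebra.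
From mathcomp Require Import zify lra.
Import Order.TTheory GRing.Theory Num.Theory.
Set Implicit Arguments. Unset Strict Implicit. Unset Printing Implicit Defensive.

Definition EE (T : finType) (G : mgraph T) (A B : {set T}) : nat :=
  \sum_(x in A) \sum_(y in B) mult G x y.

Lemma EE_sym (T : finType) (G : mgraph T) (A B : {set T}) : is_mgraph G ->
  A \subset vtx G -> B \subset vtx G -> EE G A B = EE G B A.
Proof.
case=> hs _ hA hB; rewrite /EE exchange_big; apply: eq_bigr => y yB.
apply: eq_bigr => x xA; apply: hs; [exact: (subsetP hA) | exact: (subsetP hB)].
Qed.

Lemma sumU (T : finType) (B C : {set T}) (F : T -> nat) : [disjoint B & C] ->
  \sum_(i in B :|: C) F i = \sum_(i in B) F i + \sum_(i in C) F i.
Proof.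
move=> d; rewrite (eq_bigl [predU B & C]) ?bigU // => i; by rewrite !inE.
Qed.

Lemma EE_Ur (T : finType) (G : mgraph T) (A B C : {set T}) : [disjoint B & C] ->
  EE G A (B :|: C) = EE G A B + EE G A C.
Proof. move=> d; rewrite /EE -big_split; apply: eq_bigr => x _; exact: sumU. Qed.

Lemma EE_Ul (T : finType) (G : mgraph T) (A B C : {set T}) : [disjoint B & C] ->
  EE G (B :|: C) A = EE G B A + EE G C A.
Proof. move=> d; rewrite /EE; exact: sumU. Qed.

Lemma EE_vtx (T : finType) (G : mgraph T) D (A : {set T}) : regular G D ->
  A \subset vtx G -> EE G A (vtx G) = D * #|A|.
Proof.
move=> reg hA; rewrite /EE (eq_bigr (fun _ => D)) ?sum_nat_const 1?mulnC //.
move=> x xA; exact: reg (subsetP hA x xA).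
Qed.

Lemma EE_even (T : finType) (G : mgraph T) (R : {set T}) : is_mgraph G ->
  R \subset vtx G -> ~~ odd (EE G R R).
Proof.
case=> hs h0.
move: {2}#|R| (erefl #|R|) => n; elim: n R => [|n IH] R hn hR.
  have -> : R = set0 by apply/eqP; rewrite -cards_eq0 hn.
  by rewrite /EE big_set0.
case: (set_0Vmem R) => [R0|[x xR]]; first by rewrite R0 cards0 in hn.
have hR' : R :\ x \subset vtx G by apply: subset_trans hR; apply: subD1set.
have hn' : #|R :\ x| = n by move: hn; rewrite (cardsD1 x R) xR; lia.
have := IH _ hn' hR'.
have xV : x \in vtx G by exact: (subsetP hR).
have -> : EE G R R = (\sum_(y in R :\ x) mult G x y).*2 + EE G (R :\ x) (R :\ x).
  rewrite /EE (big_setD1 x xR) /= (big_setD1 x xR) /= h0 // add0n.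
  rewrite [X in _ + X = _](eq_bigr (fun a => mult G x a + \sum_(y in R :\ x) mult G a y)); last first.
    move=> a aR'; rewrite (big_setD1 x xR) /=; congr (_ + _); apply: hs => //.
    by apply: (subsetP hR'). 
  by rewrite big_split /= -addnn addnA.
by rewrite oddD odd_double.
Qed.

Lemma EE_half (T : finType) (G : mgraph T) (R : {set T}) : is_mgraph G ->
  R \subset vtx G -> 2 * e_ind G R = EE G R R.
Proof.
move=> hG hR; have := odd_double_half (EE G R R).
rewrite (negbTE (EE_even hG hR)) add0n => h.
change (e_ind G R) with ((EE G R R)./2); by rewrite mul2n h.
Qed.

Lemma EE_set1 (T : finType) (G : mgraph T) x : is_mgraph G -> x \in vtx G ->
  EE G [set x] [set x] = 0.
Proof. case=> _ h0 xV; by rewrite /EE !big_set1 h0. Qed.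

Lemma tdens_geP (T : finType) (G : mgraph T) (R : {set T}) D : (1 < #|R|)%N ->
  (D%:R <= tdens G R)%R = (D * #|R|.-1 <= 2 * e_ind G R)%N.
Proof.
move=> h; rewrite /tdens ler_pdivlMr; last by rewrite ltr0n; lia.
by rewrite -natrM ler_nat.
Qed.

Lemma tdens_leP (T : finType) (G : mgraph T) (R : {set T}) D : (1 < #|R|)%N ->
  (tdens G R <= D%:R)%R = (2 * e_ind G R <= D * #|R|.-1)%N.
Proof.
move=> h; rewrite /tdens ler_pdivrMr; last by rewrite ltr0n; lia.
by rewrite -natrM ler_nat.
Qed.

Lemma Gamma_ge (T : finType) (G : mgraph T) (R : {set T}) : odd_big G R ->
  (tdens G R <= Gamma G)%R.
Proof. move=> h; rewrite /Gamma (bigD1 R) //=; by rewrite le_max lexx. Qed.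

Lemma sum_opt (T : finType) (P : pred (option T)) (F : option T -> nat) :
  \sum_(a | P a) F a = (if P None then F None else 0) + \sum_(x | P (Some x)) F (Some x).
Proof.
rewrite (bigID (fun a => a == None)) /=; congr (_ + _).
  case: ifP => hN.
    by rewrite (big_pred1 None) // => -[a|] /=; [case: (P _) | rewrite hN].
  by rewrite big_pred0 // => -[a|] /=; [case: (P _) | rewrite hN].
rewrite (reindex_omap Some (fun a => a)) /=; last by move=> [a|] //= /andP[].
by apply: eq_bigl => x; rewrite eqxx !andbT.
Qed.

Lemma disj_sub (T : finType) (A B C : {set T}) : A \subset C :\: B -> [disjoint A & B].
Proof.
move=> h; rewrite disjoints_subset; apply/subsetP => z /(subsetP h).
by rewrite !inE => /andP[].
Qed.

Lemma in_sh_Some (T : finType) (G : mgraph T) (X : {set T}) x :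
  (Some x \in vtx (shrink G X)) = (x \in vtx G :\: X).
Proof. by rewrite /shrink /= in_setU in_set1 orbF (mem_imset _ _ (@Some_inj _)). Qed.

Lemma in_sh_None (T : finType) (G : mgraph T) (X : {set T}) :
  None \in vtx (shrink G X).
Proof. by rewrite /shrink /= in_setU in_set1 eqxx orbT. Qed.

Lemma shrink_main (T : finType) (G : mgraph T) (D : nat) (X : {set T}) :
  is_mgraph G -> regular G D -> X \subset vtx G ->
  (EE G (vtx G :\: X) X <= D)%N ->
  (forall R : {set T}, R \subset vtx G :\: X -> ~~ odd #|R| ->
      (EE G R R + 2 * EE G R X <= D * #|R|)%N) ->
  (D%:R <= Gamma G)%R ->
  (maxdeg (shrink G X) <= D)%N /\ (Gamma (shrink G X) <= Gamma G)%R.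
Proof.
move=> hG reg hX hA hB hGam.
have hXI : X :&: vtx G = X by apply/setIidPl.
have hYX : [disjoint vtx G :\: X & X].
  exact: disj_sub (subxx _).
have hV : vtx G = (vtx G :\: X) :|: X.
  apply/setP => z; rewrite !inE; have := subsetP hX z.
  by case: (z \in X); case: (z \in vtx G) => //= ->.
have hYV : vtx G :\: X \subset vtx G by apply: subsetDl.
split.
  apply/bigmax_leqP => -[u|] hu.
    rewrite in_sh_Some in hu.
    rewrite /deg (sum_opt (fun b => b \in vtx (shrink G X))) in_sh_None /= hXI.
    rewrite [Z in _ + Z <= _](eq_bigl (fun x => x \in vtx G :\: X)); last by move=> x; rewrite in_sh_Some.
    have hdeg : deg G u = \sum_(w in vtx G :\: X) mult G u w + \sum_(w in X) mult G u w.
      by rewrite /deg {1}hV sumU.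
    by rewrite addnC -hdeg reg // (subsetP hYV u hu).
  rewrite /deg (sum_opt (fun b => b \in vtx (shrink G X))) in_sh_None /= hXI add0n.
  rewrite (eq_bigl (fun x => x \in vtx G :\: X)); last by move=> x; rewrite in_sh_Some.
  exact: hA.
have G0 : (0 <= Gamma G)%R by apply: le_trans hGam; rewrite ler0n.
rewrite /Gamma; apply: (big_ind (fun x => x <= Gamma G)%R) => //.
  by move=> x y hx hy; rewrite ge_max hx hy.
move=> R' /and3P[hsub hodd h3].
set R := [set x | Some x \in R'].
have hRY : R \subset vtx G :\: X.
  apply/subsetP => x; rewrite inE => hx; have := subsetP hsub _ hx.
  by rewrite in_sh_Some.
have hcard : #|R'| = (None \in R') + #|R|.
  rewrite -!sum1_card (sum_opt (fun a => a \in R')); congr (_ + _).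
  by apply: eq_bigl => x; rewrite inE.
have inner : forall a, \sum_(b in R') shrink_mult G X a b =
    (if None \in R' then shrink_mult G X a None else 0) +
    \sum_(y in R) shrink_mult G X a (Some y).
  move=> a; rewrite (sum_opt (fun b => b \in R')); congr (_ + _).
  by apply: eq_bigl => y; rewrite inE.
have hE : EE (shrink G X) R' R' =
    (if None \in R' then 2 * EE G R X else 0) + EE G R R.
  rewrite /EE (eq_bigr _ (fun a _ => inner a)) (sum_opt (fun a => a \in R')).
  have sR : forall F : T -> nat, \sum_(x | Some x \in R') F x = \sum_(x in R) F x.
    by move=> F; apply: eq_bigl => x; rewrite inE.
  rewrite sR.
  case: (None \in R') => /=; rewrite ?hXI.
    by rewrite add0n big_split /= addnA mul2n -addnn.
  by rewrite add0n; apply: eq_bigr => x _; rewrite add0n.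
case hN : (None \in R'); rewrite hN /= in hcard hE.
  have hRe : ~~ odd #|R| by move: hodd; rewrite hcard oddD /=; case: (odd #|R|).
  apply: le_trans hGam.
  rewrite tdens_leP; last by lia.
  have := hB R hRY hRe.
  have := odd_double_half (EE (shrink G X) R' R').
  change (e_ind (shrink G X) R') with ((EE (shrink G X) R' R')./2).
  rewrite hcard hE /= => H1 H2; clear -H1 H2; lia.
have -> : tdens (shrink G X) R' = tdens G R.
  rewrite /tdens hcard /=.
  by change (e_ind (shrink G X) R') with ((EE (shrink G X) R' R')./2); rewrite hE.
move: hodd h3; rewrite hcard add0n => hodd h3.
apply: Gamma_ge; rewrite /odd_big hodd h3 andbT.
by rewrite andbT (subset_trans hRY hYV).
Qed.

Theorem lemmaG (T : finType) (G : mgraph T) (D : nat) (S : {set T}) :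
  is_mgraph G ->
  regular G D ->
  ~~ odd #|vtx G| ->
  S \proper vtx G ->
  odd #|S| -> (3 <= #|S|)%N ->
  (D%:R <= tdens G S)%R ->
  (forall R : {set T}, odd_big G R -> (D%:R <= tdens G R)%R ->
     (excess G R D <= excess G S D)%R) ->
  [/\ (maxdeg (shrink G S) <= D)%N,
      (Gamma (shrink G S) <= Gamma G)%R,
      (maxdeg (shrink G (vtx G :\: S)) <= D)%N &
      (Gamma (shrink G (vtx G :\: S)) <= Gamma G)%R].
Proof.
move=> hG reg hev hSV hSodd hS3 hSt hmax.
have hSsub : S \subset vtx G by apply: proper_sub.
have hSE : D * #|S|.-1 <= EE G S S.
  by rewrite -(EE_half hG hSsub) -tdens_geP //; lia.
have K : forall R : {set T}, R \subset vtx G -> odd #|R| ->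
    EE G R R + D * #|S|.-1 <= EE G S S + D * #|R|.-1.
  move=> R hR hRo.
  have hRE := EE_half hG hR.
  case: (ltnP #|R| 3) => hR3.
    have h1 : #|R| = 1 by move: hRo hR3; case: #|R| => [|[|[|]]].
    have /cards1P [x Rx] : #|R| == 1 by rewrite h1.
    have xV : x \in vtx G by apply: (subsetP hR); rewrite Rx set11.
    rewrite h1 Rx EE_set1 //; lia.
  case: (leqP (D * #|R|.-1) (EE G R R)) => hRt; last by lia.
  have hob : odd_big G R by rewrite /odd_big hR hRo hR3.
  have := hmax R hob; rewrite tdens_geP ?hRE; last by lia.
  move=> /(_ hRt); rewrite /excess => h.
  have : ((2 * e_ind G R + D * #|S|.-1)%N%:R <= (2 * e_ind G S + D * #|R|.-1)%N%:R :> rat)%R.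
    by rewrite !mul2n -!addnn !natrD; lra.
  by rewrite ler_nat hRE (EE_half hG hSsub).
set Sc := vtx G :\: S.
have hScV : Sc \subset vtx G by apply: subsetDl.
have hdSSc : [disjoint S & Sc].
  by rewrite disjoint_sym; apply: (@disj_sub _ _ _ (vtx G)).
have hV2 : vtx G = S :|: Sc.
  apply/setP => z; rewrite !inE; have := subsetP hSsub z.
  by case: (z \in S); case: (z \in vtx G) => //= ->.
have hSs : D * #|S| = D * #|S|.-1 + D by rewrite -mulnSr prednK //; lia.
have hA : EE G S Sc <= D.
  have := EE_vtx reg hSsub; rewrite {1}hV2 EE_Ur //; lia.
have hGam : (D%:R <= Gamma G)%R by apply: le_trans hSt (Gamma_ge _); rewrite /odd_big hSsub hSodd hS3.
have [h1 h2] : (maxdeg (shrink G S) <= D)%N /\ (Gamma (shrink G S) <= Gamma G)%R.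
  apply: shrink_main => //.
    by rewrite -/Sc (EE_sym hG hScV hSsub).
  move=> R hR hRe.
  have hRS : [disjoint R & S] by apply: disj_sub hR.
  have hRV : R \subset vtx G by apply: subset_trans hR hScV.
  have hRSV : R :|: S \subset vtx G by rewrite subUset hRV hSsub.
  have hc : #|R :|: S| = #|R| + #|S| by rewrite cardsU (disjoint_setI0 hRS) cards0 subn0.
  have := K _ hRSV; rewrite hc oddD hSodd (negbTE hRe) => /(_ isT).
  rewrite EE_Ul // !EE_Ur // (EE_sym hG hSsub hRV).
  have -> : (#|R| + #|S|).-1 = #|R| + #|S|.-1 by clear -hS3; lia.
  rewrite mulnDr => H; clear -H; lia.
have hSc2 : vtx G :\: Sc = S.
  by rewrite /Sc setDDr setDv set0U; apply/setIidPr.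
have [h3 h4] : (maxdeg (shrink G Sc) <= D)%N /\ (Gamma (shrink G Sc) <= Gamma G)%R.
  apply: shrink_main => //; rewrite hSc2 //.
  move=> R hR hRe.
  set Q := S :\: R.
  have hdRQ : [disjoint R & Q] by rewrite disjoint_sym; apply: (@disj_sub _ _ _ S).
  have hSRQ : S = R :|: Q.
    apply/setP => z; rewrite !inE; have := subsetP hR z.
    by case: (z \in R); case: (z \in S) => //= ->.
  have hQS : Q \subset S by apply: subsetDl.
  have hQV : Q \subset vtx G by apply: subset_trans hQS hSsub.
  have hRV : R \subset vtx G by apply: subset_trans hR hSsub.
  have hcS : #|S| = #|R| + #|Q|.
    by rewrite {1}hSRQ cardsU (disjoint_setI0 hdRQ) cards0 subn0.
  have hQo : odd #|Q| by move: hSodd; rewrite hcS oddD (negbTE hRe).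
  have hQ1 : 0 < #|Q| by move: hQo; case: #|Q|.
  have := K _ hQV hQo.
  have -> : #|S|.-1 = #|R| + #|Q|.-1 by clear -hcS hQ1; lia.
  have hES : EE G S S = EE G R R + EE G R Q + (EE G Q R + EE G Q Q).
    by rewrite {1 2}hSRQ EE_Ul // !EE_Ur.
  have hER : EE G R (vtx G) = EE G R R + EE G R Q + EE G R Sc.
    by rewrite hV2 EE_Ur // {1}hSRQ EE_Ur.
  rewrite hES (EE_sym hG hQV hRV) mulnDr.
  have := EE_vtx reg hRV; rewrite hER => H1 H2; clear -H1 H2; lia.
by [].
Qed.
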